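(* Suppose $n \ge 2k + 1 \ge 5$. Let $Q$ be an independent set of vertices in $K(n,k)$. Suppose $x_1x_2$ is an edge of $K(n,k)$ such that $x_1\in Q$. If $N(\{x_1,x_2\})$ and $Q$ are disjoint, then $|Q| \le \binom{n-1}{k-1}-\binom{n-k-1}{k-1}+1$.
   Context: The Kneser graph $K(n,k)$ has as vertices the $k$-element subsets of $[n]=\{1,\dots,n\}$, two vertices being adjacent iff they are disjoint. For a set $X$ of vertices of a graph, the neighborhood $N(X)$ is the set of vertices not in $X$ that are adjacent to at least one vertex of $X$. *)

(* Defs.v *)
From mathcomp Require Import all_boot.
Set Implicit Arguments. Unset Strict Implicit. Unset Printing Implicit Defensive.

(* Kneser graph K(n,k): vertices are the k-subsets of [n] (modelled as
   'I_n = {0,...,n-1}), adjacency = disjointness. *)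
Definition kvert (n k : nat) (A : {set 'I_n}) : bool := #|A| == k.

Definition kadj (n : nat) (A B : {set 'I_n}) : bool := [disjoint A & B].

Definition kindep (n k : nat) (Q : {set {set 'I_n}}) : bool :=
  [forall A in Q, kvert k A] &&
  [forall A in Q, forall B in Q, ~~ kadj A B].

Definition knbhd (n k : nat) (X : {set {set 'I_n}}) : {set {set 'I_n}} :=
  [set B | kvert k B && (B \notin X) && [exists A in X, kadj A B]].

(* Main.v *)
Require Import Defs.
From mathcomp Require Import all_boot zify.
Set Implicit Arguments. Unset Strict Implicit. Unset Printing Implicit Defensive.

Ltac gen_cards := repeat match goal with
  | H : context [#|?X|] |- _ => revert H
  end; repeat match goal with |- context [#|?X|] => generalize #|X| end; intros.
Ltac clia := gen_cards; lia.

Section Shift.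
Variable T : finType.
Implicit Types (F A B : {set {set T}}) (G H L S Y : {set T}).

Definition sh (w z : T) G := z |: (G :\ w).
Definition shs (w z : T) F G :=
  if [&& w \in G, z \notin G & sh w z G \notin F] then sh w z G else G.
Definition shiftF (w z : T) F := [set shs w z F G | G in F].

Definition cross (t : nat) A B :=
  forall G H, G \in A -> H \in B -> t <= #|G :&: H|.
Definition fam Y (k : nat) F := forall G, G \in F -> G \subset Y /\ #|G| = k.

Lemma sh_notin w z G : z != w -> w \notin sh w z G.
Proof. by move=> zw; rewrite !inE eq_sym (negbTE zw) eqxx. Qed.

Lemma sh_in w z G : z \in sh w z G.
Proof. by rewrite !inE eqxx. Qed.

Lemma sh_back w z G : w \in G -> z \notin G -> w |: (sh w z G :\ z) = G.
Proof.
move=> wG zG; apply/setP=> x; rewrite !inE.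
case: (eqVneq x w) => [->|xw]; first by rewrite wG.
case: (eqVneq x z) => [->|xz] //=; by rewrite (negbTE zG).
Qed.

Lemma card_sh w z G : w \in G -> z \notin G -> #|sh w z G| = #|G|.
Proof.
move=> wG zG; rewrite /sh cardsU1 !inE (negbTE zG) andbF /=.
by rewrite (cardsD1 w G) wG.
Qed.

Lemma shs_inj w z F : z != w -> {in F &, injective (shs w z F)}.
Proof.
move=> zw G1 G2 h1 h2; rewrite /shs.
case: (boolP [&& w \in G1, z \notin G1 & sh w z G1 \notin F]) => c1;
case: (boolP [&& w \in G2, z \notin G2 & sh w z G2 \notin F]) => c2 //.
- move: c1 c2 => /and3P[w1 z1 _] /and3P[w2 z2 _] e.
  by rewrite -(sh_back w1 z1) -(sh_back w2 z2) e.
- by move: c1 => /and3P[_ _ n1] e; move: n1; rewrite e h2.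
- by move: c2 => /and3P[_ _ n2] e; move: n2; rewrite -e h1.
Qed.

Lemma card_shiftF w z F : z != w -> #|shiftF w z F| = #|F|.
Proof. by move=> zw; rewrite card_in_imset //; apply: shs_inj. Qed.

Lemma fam_shift Y k w z F : z \in Y -> fam Y k F -> fam Y k (shiftF w z F).
Proof.
move=> zY hF H /imsetP[G GF ->]; have [GY cG] := hF G GF.
rewrite /shs; case: ifP => [/and3P[wG zG _]|_]; last by [].
split; last by rewrite card_sh.
apply/subsetP=> x; rewrite !inE => /orP[/eqP->//|/andP[_ xG]].
exact: (subsetP GY).
Qed.


Lemma cross_sym t A B : cross t A B -> cross t B A.
Proof. by move=> h G H GB HA; rewrite setIC; apply: h. Qed.

Lemma cross_key t w z A B G H : z != w -> cross t A B -> G \in A -> H \in B ->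
  w \in G -> z \notin G ->
  ~~ [&& w \in H, z \notin H & sh w z H \notin B] ->
  t <= #|sh w z G :&: H|.
Proof.
move=> zw hAB GA HB wG zG nH.
have hGH := hAB G H GA HB.
case: (boolP (w \in H)) => wH; last first.
  apply: (leq_trans hGH); apply: subset_leq_card; apply/subsetP=> x.
  rewrite !inE => /andP[xG xH]; rewrite xG xH !andbT; apply/orP; right.
  by apply/eqP=> exw; move: wH; rewrite -exw xH.
case: (boolP (z \in H)) => zH.
  have -> : sh w z G :&: H = z |: ((G :&: H) :\ w).
    apply/setP=> x; rewrite !inE.
    case: (eqVneq x z) => [->|xz] /=; first by rewrite zH.
    by rewrite andbA.
  rewrite cardsU1 !inE (negbTE zG) andbF /=.
  move: hGH; rewrite (cardsD1 w (G :&: H)) !inE wG wH /=; lia.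
move: nH; rewrite wH zH /= negbK => sHB.
have := hAB G _ GA sHB.
have -> : G :&: sh w z H = sh w z G :&: H.
  apply/setP=> x; rewrite !inE.
  case: (eqVneq x z) => [->|xz] /=; first by rewrite (negbTE zG) (negbTE zH).
  case: (eqVneq x w) => [->|xw] /=; by rewrite ?andbF.
by [].
Qed.

Lemma cross_shift t w z A B : z != w -> cross t A B ->
  cross t (shiftF w z A) (shiftF w z B).
Proof.
move=> zw hAB G' H' /imsetP[G GA ->] /imsetP[H HB ->].
rewrite /shs.
case: (boolP [&& w \in G, z \notin G & sh w z G \notin A]) => cG;
case: (boolP [&& w \in H, z \notin H & sh w z H \notin B]) => cH.
- move: cG cH => /and3P[wG zG _] /and3P[wH zH _].
  have -> : sh w z G :&: sh w z H = z |: ((G :&: H) :\ w).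
    apply/setP=> x; rewrite !inE.
    case: (eqVneq x z) => [->|xz] //=.
    case: (eqVneq x w) => [->|xw] //=.
  rewrite cardsU1 !inE (negbTE zG) andbF /=.
  have := hAB G H GA HB; rewrite (cardsD1 w (G :&: H)) !inE wG wH /=; lia.
- by move: cG => /and3P[wG zG _]; apply: (cross_key zw hAB).
- move: cH => /and3P[wH zH _]; rewrite setIC.
  exact: (cross_key zw (cross_sym hAB)).
- exact: hAB.
Qed.

Lemma pot_sub (p : {set T} -> bool) w z F : (forall G, ~~ p (sh w z G)) ->
  [set H in shiftF w z F | p H] \subset [set G in F | p G].
Proof.
move=> hp; apply/subsetP=> H; rewrite !inE => /andP[/imsetP[G GF ->]].
rewrite /shs; case: ifP => _ pH; last by rewrite GF pH.
by move: (hp G); rewrite pH.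
Qed.

Lemma pot_lt (p : {set T} -> bool) w z F G0 : (forall G, ~~ p (sh w z G)) ->
  G0 \in F -> w \in G0 -> z \notin G0 -> sh w z G0 \notin F -> p G0 ->
  #|[set H in shiftF w z F | p H]| < #|[set G in F | p G]|.
Proof.
move=> hp G0F wG0 zG0 nG0 pG0; apply: proper_card; rewrite properE pot_sub //=.
apply/subsetPn; exists G0; first by rewrite inE G0F pG0.
rewrite inE pG0 andbT; apply/imsetP=> -[G GF]; rewrite /shs.
case: ifP => [_ e|/negbT c e]; first by move: (hp G); rewrite -e pG0.
by move: c; rewrite -e wG0 zG0 nG0.
Qed.

Definition stable w Y F := forall G z, G \in F -> w \in G -> z \in Y -> z \notin G ->
  sh w z G \in F.
Definition stableb w Y F := [forall G in F, forall z in Y,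
  ((w \in G) && (z \notin G)) ==> (sh w z G \in F)].

Lemma stableP w Y F : reflect (stable w Y F) (stableb w Y F).
Proof.
apply: (iffP forall_inP) => [h G z GF wG zY zG|h G GF].
  by move/forall_inP: (h G GF) => /(_ z zY); rewrite wG zG /= => ->.
by apply/forall_inP=> z zY; apply/implyP=> /andP[wG zG]; apply: h.
Qed.

Lemma not_stable w Y F : ~~ stableb w Y F ->
  exists G z, [/\ G \in F, w \in G, z \in Y, z \notin G & sh w z G \notin F].
Proof.
move=> /forall_inPn[G GF] /forall_inPn[z zY]; rewrite negb_imply => /andP[/andP[wG zG] nG].
by exists G, z.
Qed.

Lemma stabilize (P : {set {set T}} -> {set {set T}} -> Prop) w Y :
  (forall A B z, z \in Y -> z != w -> P A B -> P (shiftF w z A) (shiftF w z B)) ->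
  forall A B, P A B -> exists A' B', [/\ P A' B', #|A'| = #|A|, #|B'| = #|B|,
    stable w Y A' & stable w Y B'].
Proof.
move=> hP A B.
suff: forall m A B, #|[set G in A | w \in G]| + #|[set G in B | w \in G]| <= m ->
  P A B -> exists A' B', [/\ P A' B', #|A'| = #|A|, #|B'| = #|B|,
    stable w Y A' & stable w Y B'] by apply.
elim=> [|m IH] {}A {}B hm PAB.
  case: (boolP (stableb w Y A)) => [/stableP sA|/not_stable[G [z [GF wG zY zG nG]]]].
    case: (boolP (stableb w Y B)) => [/stableP sB|/not_stable[G [z [GF wG zY zG nG]]]].
      by exists A, B.
    have zw : z != w by apply: contraNneq zG => ->.
    have h : #|[set H in shiftF w z B | w \in H]| < #|[set G in B | w \in G]|.
      exact: (@pot_lt (fun H => w \in H) w z B G (fun G => sh_notin _ zw) GF wG zG nG wG).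
    by move: hm; rewrite leqn0 addn_eq0 => /andP[_ /eqP hb]; rewrite hb in h.
  have zw : z != w by apply: contraNneq zG => ->.
  have h : #|[set H in shiftF w z A | w \in H]| < #|[set G in A | w \in G]|.
    exact: (@pot_lt (fun H => w \in H) w z A G (fun G => sh_notin _ zw) GF wG zG nG wG).
  by move: hm; rewrite leqn0 addn_eq0 => /andP[/eqP ha _]; rewrite ha in h.
case: (boolP (stableb w Y A)) => [/stableP sA|/not_stable[G [z [GF wG zY zG nG]]]].
  case: (boolP (stableb w Y B)) => [/stableP sB|/not_stable[G [z [GF wG zY zG nG]]]].
    by exists A, B.
  have zw : z != w by apply: contraNneq zG => ->.
  have h1 : #|[set H in shiftF w z B | w \in H]| < #|[set G in B | w \in G]|.
    exact: (@pot_lt (fun H => w \in H) w z B G (fun G => sh_notin _ zw) GF wG zG nG wG).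
  have h3 : #|[set H in shiftF w z A | w \in H]| <= #|[set G in A | w \in G]|.
    exact: (subset_leq_card (@pot_sub (fun H => w \in H) w z A (fun G => sh_notin _ zw))).
  have [|A' [B' [P' c1 c2 s1 s2]]] := IH (shiftF w z A) (shiftF w z B) _ (hP _ _ _ zY zw PAB).
    by have := leq_trans (leq_add h3 h1) hm; rewrite addnS ltnS.
  by exists A', B'; split; rewrite // ?c1 ?c2 card_shiftF.
have zw : z != w by apply: contraNneq zG => ->.
have h1 : #|[set H in shiftF w z A | w \in H]| < #|[set G in A | w \in G]|.
  exact: (@pot_lt (fun H => w \in H) w z A G (fun G => sh_notin _ zw) GF wG zG nG wG).
have h3 : #|[set H in shiftF w z B | w \in H]| <= #|[set G in B | w \in G]|.
  exact: (subset_leq_card (@pot_sub (fun H => w \in H) w z B (fun G => sh_notin _ zw))).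
have [|A' [B' [P' c1 c2 s1 s2]]] := IH (shiftF w z A) (shiftF w z B) _ (hP _ _ _ zY zw PAB).
  by have := leq_trans (leq_add h1 h3) hm; rewrite addSn ltnS.
by exists A', B'; split; rewrite // ?c1 ?c2 card_shiftF.
Qed.

Definition avoid (w : T) F := [set G in F | w \notin G].
Definition links (w : T) F := [set L : {set T} | (w \notin L) && (w |: L \in F)].

Lemma card_split w F : #|F| = #|avoid w F| + #|links w F|.
Proof.
rewrite -(cardsID [set G : {set T} | w \in G] F) addnC; congr (_ + _).
  by apply: eq_card => G; rewrite !inE andbC.
have -> : F :&: [set G : {set T} | w \in G] = (fun L => w |: L) @: links w F.
  apply/setP=> G; rewrite !inE; apply/andP/imsetP => [[GF wG]|[L]].
    by exists (G :\ w); [rewrite inE setD11 (setD1K wG) GF | rewrite (setD1K wG)].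
  by rewrite inE => /andP[_ LF] ->; rewrite LF setU11.
rewrite card_in_imset // => L1 L2; rewrite !inE => /andP[w1 _] /andP[w2 _] e.
by rewrite -(setU1K w1) -(setU1K w2) e.
Qed.

Lemma fam_sub Y k F F' : F' \subset F -> fam Y k F -> fam Y k F'.
Proof. by move=> /subsetP sF hF G /sF; apply: hF. Qed.

Lemma cross_sub t A B A' B' : A' \subset A -> B' \subset B -> cross t A B -> cross t A' B'.
Proof. by move=> /subsetP sA /subsetP sB h G H /sA GA /sB HB; apply: h. Qed.

Lemma avoid_sub w F : avoid w F \subset F.
Proof. by apply/subsetP=> G; rewrite inE => /andP[]. Qed.

Lemma fam_avoid Y k w F : fam Y k F -> fam (Y :\ w) k (avoid w F).
Proof.
move=> hF G; rewrite inE => /andP[GF wG]; have [GY cG] := hF G GF; split=> //.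
by apply/subsetP=> x xG; rewrite !inE (subsetP GY) // andbT; apply: contraNneq wG => <-.
Qed.

Lemma fam_links Y k w F : fam Y k F -> fam (Y :\ w) k.-1 (links w F).
Proof.
move=> hF L; rewrite inE => /andP[wL LF]; have [LY cL] := hF _ LF; split.
  apply/subsetP=> x xL; rewrite !inE (subsetP LY) ?inE ?xL ?orbT // andbT.
  by apply: contraNneq wL => <-.
by move: cL; rewrite cardsU1 wL => <-.
Qed.

Lemma fam_card Y k F : fam Y k F -> #|F| <= 'C(#|Y|, k).
Proof.
move=> hF; rewrite -cards_draws; apply: subset_leq_card; apply/subsetP=> G GF.
by have [GY cG] := hF G GF; rewrite inE GY cG eqxx.
Qed.

Lemma fam_card_meet Y k F G : G \subset Y -> fam Y k F ->
  (forall S, S \in F -> 0 < #|S :&: G|) ->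
  #|F| <= 'C(#|Y|, k) - 'C(#|Y :\: G|, k).
Proof.
move=> GY hF hm.
set D := [set A : {set T} | A \subset Y & #|A| == k].
set D' := [set A : {set T} | A \subset Y :\: G & #|A| == k].
have sD : D' \subset D.
  apply/subsetP=> A; rewrite !inE => /andP[AY ->]; rewrite andbT.
  by apply: subset_trans AY _; apply: subsetDl.
have -> : 'C(#|Y|, k) - 'C(#|Y :\: G|, k) = #|D :\: D'|.
  by rewrite [#|D :\: D'|]cardsD (setIidPr sD) !cards_draws.
apply: subset_leq_card; apply/subsetP=> S SF; have [SY cS] := hF S SF.
rewrite !inE SY cS eqxx andbT /= andbT; apply/negP=> sS.
have := hm S SF; rewrite card_gt0 => /set0Pn[x]; rewrite inE => /andP[xS xG].
by move: (subsetP sS x xS); rewrite !inE xG.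
Qed.

Lemma setDD_sub Y G : G \subset Y -> Y :\: (Y :\: G) = G.
Proof. by move=> GY; rewrite setDDr setDv set0U (setIidPr GY). Qed.

Lemma base_bound Y a b A B : fam Y a A -> fam Y b B -> a + b = #|Y| ->
  cross 1 A B -> #|A| + #|B| <= 'C(#|Y|, b).
Proof.
move=> hA hB ab hAB.
set C := [set Y :\: G | G in A].
have cC : #|C| = #|A|.
  rewrite card_in_imset // => G1 G2 h1 h2 e.
  have [s1 _] := hA G1 h1; have [s2 _] := hA G2 h2.
  by rewrite -(setDD_sub s1) -(setDD_sub s2) e.
have dCB : [disjoint C & B].
  rewrite -setI_eq0; apply/eqP/setP=> S; rewrite !inE.
  apply/negP=> /andP[/imsetP[G GA ->] SB].
  by have := hAB G _ GA SB; rewrite setIDA setIC -setIDA setDv setI0 cards0.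
rewrite -cC; have -> : #|C| + #|B| = #|C :|: B| by rewrite cardsU (disjoint_setI0 dCB) cards0 subn0.
rewrite -cards_draws; apply: subset_leq_card; apply/subsetP=> S.
rewrite !inE => /orP[/imsetP[G GA ->]|SB]; last first.
  by have [SY ->] := hB S SB; rewrite SY eqxx.
have [GY cG] := hA G GA; rewrite subsetDl /= cardsD (setIidPr GY) cG -ab.
by rewrite addKn.
Qed.

Lemma room Y G H : G \subset Y -> H \subset Y -> #|G| + #|H| < #|Y| + #|G :&: H| ->
  exists2 z, z \in Y & (z \notin G) && (z \notin H).
Proof.
move=> GY HY hc.
case: (boolP [exists z in Y, (z \notin G) && (z \notin H)]) => [/exists_inP[z zY h]|/exists_inPn hn].
  by exists z.
have : Y \subset G :|: H.
  by apply/subsetP=> z zY; move: (hn z zY); rewrite negb_and !negbK inE.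
move/subset_leq_card; rewrite -(leq_add2r #|G :&: H|) cardsUI => h.
by move: (leq_trans hc h); rewrite ltnn.
Qed.

Lemma sh_U1 w z L : w \notin L -> sh w z (w |: L) = z |: L.
Proof. by move=> wL; rewrite /sh setU1K. Qed.

Lemma inter_links w z L L' : w \notin L -> z != w -> z \notin L' ->
  (z |: L) :&: (w |: L') = L :&: L'.
Proof.
move=> wL zw zL'; apply/setP=> x; rewrite !inE.
case: (eqVneq x z) => [->|xz]; first by rewrite (negbTE zw) (negbTE zL') /= andbF.
case: (eqVneq x w) => [->|xw] /=; first by rewrite (negbTE wL).
by [].
Qed.

Lemma links_cross t w Y A B k1 k2 : fam Y k1 A -> fam Y k2 B -> stable w Y A ->
  cross t A B -> k1 + k2 < #|Y| + t -> cross t (links w A) (links w B).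
Proof.
move=> hA hB sA hAB hk L S; rewrite !inE => /andP[wL LA] /andP[wS SB].
have [GY cG] := hA _ LA; have [HY cH] := hB _ SB.
have ht := hAB _ _ LA SB.
have [z zY /andP[zG zH]] : exists2 z, z \in Y & (z \notin w |: L) && (z \notin w |: S).
  by apply: room => //; rewrite cG cH; apply: (leq_trans hk); rewrite leq_add2l.
have zw : z != w by apply: contraNneq zG => ->; rewrite setU11.
have := hAB _ _ (sA _ z LA (setU11 _ _) zY zG) SB.
rewrite sh_U1 // inter_links //; apply: contra zH => zS; rewrite !inE zS orbT //.
Qed.

Lemma avoid_ne w Y k A : fam Y k A -> stable w Y A -> k < #|Y| -> A != set0 ->
  avoid w A != set0.
Proof.
move=> hA sA hk /set0Pn[G GA]; apply/set0Pn.
case: (boolP (w \in G)) => wG; last by exists G; rewrite inE GA.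
have [GY cG] := hA G GA.
have [z zY /andP[zG _]] : exists2 z, z \in Y & (z \notin G) && (z \notin G).
  by apply: room => //; rewrite setIid cG; rewrite ltn_add2r.
have zw : z != w by apply: contraNneq zG => ->.
by exists (sh w z G); rewrite inE sA // sh_notin.
Qed.

Lemma links_meet w A B G0 : G0 \in avoid w A -> cross 1 A B ->
  forall S, S \in links w B -> 0 < #|S :&: G0|.
Proof.
rewrite inE => /andP[G0A wG0] hAB S; rewrite inE => /andP[wS SB].
have := hAB _ _ G0A SB.
have -> : G0 :&: (w |: S) = S :&: G0.
  apply/setP=> x; rewrite !inE; case: (eqVneq x w) => [->|] /=.
    by rewrite (negbTE wS) (negbTE wG0).
  by rewrite andbC.
by [].
Qed.

Lemma card_avoid_Y Y w G : w \in Y -> G \subset Y :\ w -> #|(Y :\ w) :\: G| = #|Y| - #|G| - 1.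
Proof.
move=> wY GY; rewrite cardsD (setIidPr GY) (cardsD1 w Y) wY; lia.
Qed.

Lemma L2 N : forall k Y A B, #|Y| = N -> 2 * k.+2 <= N.+1 ->
  fam Y k.+2 A -> fam Y k.+1 B -> cross 2 A A -> cross 1 A B -> A != set0 ->
  #|A| + #|B| <= 'C(N, k.+1) - 'C(N - k.+2, k.+1) + 1.
Proof.
elim: N => [|N IH] k Y A B hY hk hA hB h2 h1 hne; first by lia.
case: (ltnP N.+1 (2 * k.+2)) => hk'.
  have e : N.+1 - k.+2 = k.+1 by lia.
  rewrite e binn subnK; last by rewrite bin_gt0; lia.
  by rewrite -hY; apply: base_bound hA hB _ h1; lia.
have /set0Pn[w wY] : Y != set0 by rewrite -card_gt0 hY.
pose P A B := [/\ fam Y k.+2 A, fam Y k.+1 B, cross 2 A A, cross 1 A B & A != set0].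
have hP : forall A B z, z \in Y -> z != w -> P A B -> P (shiftF w z A) (shiftF w z B).
  move=> A0 B0 z zY zw [a1 a2 a3 a4 a5]; split; try exact: fam_shift;
    try exact: cross_shift.
  by rewrite -card_gt0 card_shiftF // card_gt0.
have [A' [B' [[fA fB c2 c1 ne] <- <- sA sB]]] := @stabilize P w Y hP A B (And5 hA hB h2 h1 hne).
rewrite (card_split w A') (card_split w B').
have hY' : #|Y :\ w| = N by move: hY; rewrite (cardsD1 w Y) wY add1n => -[].
have ne0 : avoid w A' != set0 by apply: (avoid_ne fA sA) => //; lia.
have i1 : #|avoid w A'| + #|avoid w B'| <= 'C(N, k.+1) - 'C(N - k.+2, k.+1) + 1
  := IH k (Y :\ w) (avoid w A') (avoid w B') hY' hk' (fam_avoid (w:=w) fA)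
  (fam_avoid (w:=w) fB) (cross_sub (avoid_sub _ _) (avoid_sub _ _) c2)
  (cross_sub (avoid_sub _ _) (avoid_sub _ _) c1) ne0.
have l2 : cross 2 (links w A') (links w A') by apply: (links_cross fA fA sA c2); lia.
have l1 : cross 1 (links w A') (links w B') by apply: (links_cross fA fB sA c1); lia.
have i2 : #|links w A'| + #|links w B'| <= 'C(N, k) - 'C(N - k.+2, k).
  case: (eqVneq (links w A') set0) => [A1e|A1ne].
    rewrite A1e cards0 add0n.
    have /set0Pn[G0 G0A] := ne0.
    have [G0Y cG0] := fam_avoid (w:=w) fA G0A.
    have := fam_card_meet G0Y (fam_links (w:=w) fB) (links_meet G0A c1).
    by rewrite hY' card_avoid_Y // hY cG0 /=; congr (_ <= _ - 'C(_, _)); lia.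
  case: k hk hk' {hA hB h1 h2 i1 hP P} fA fB c1 c2 l1 l2 A1ne => [|k] hk hk' fA fB c1 c2 l1 l2 A1ne.
    have /set0Pn[L LA] := A1ne; have [_ cL] := fam_links (w:=w) fA LA.
    by have := l2 L L LA LA; rewrite setIid cL.
  have i : #|links w A'| + #|links w B'| <= 'C(N, k.+1) - 'C(N - k.+2, k.+1) + 1
    := IH k (Y :\ w) (links w A') (links w B') hY' ltac:(lia) (fam_links (w:=w) fA)
    (fam_links (w:=w) fB) l2 l1 A1ne.
  have e : N - k.+2 = (N - k.+3).+1 by lia.
  move: i; rewrite e binS.
  have : 0 < 'C(N - k.+3, k) by rewrite bin_gt0; lia.
  have : 'C(N - k.+3, k.+1) + 'C(N - k.+3, k) <= 'C(N, k.+1).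
    by rewrite -binS -e leq_bin2l //; lia.
  lia.
have e : N.+1 - k.+2 = (N - k.+2).+1 by lia.
rewrite e !binS.
have : 'C(N - k.+2, k.+1) <= 'C(N, k.+1) by rewrite leq_bin2l //; lia.
have : 'C(N - k.+2, k) <= 'C(N, k) by rewrite leq_bin2l //; lia.
lia.
Qed.

Lemma HMX N : forall r Y A B, #|Y| = N -> 2 * r.+1 <= N ->
  fam Y r.+1 A -> fam Y r.+1 B -> cross 1 A B -> A != set0 -> B != set0 ->
  #|A| + #|B| <= 'C(N, r.+1) - 'C(N - r.+1, r.+1) + 1.
Proof.
elim: N => [|N IH] r Y A B hY hk hA hB h1 hneA hneB; first by lia.
case: (ltnP N.+1 (2 * r.+1).+1) => hk'.
  have e : N.+1 - r.+1 = r.+1 by lia.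
  rewrite e binn subnK; last by rewrite bin_gt0; lia.
  by rewrite -hY; apply: base_bound hA hB _ h1; lia.
have /set0Pn[w wY] : Y != set0 by rewrite -card_gt0 hY.
pose P A B := [/\ fam Y r.+1 A, fam Y r.+1 B, cross 1 A B, A != set0 & B != set0].
have hP : forall A B z, z \in Y -> z != w -> P A B -> P (shiftF w z A) (shiftF w z B).
  move=> A0 B0 z zY zw [a1 a2 a3 a4 a5]; split; try exact: fam_shift;
    try exact: cross_shift.
    by rewrite -card_gt0 card_shiftF // card_gt0.
  by rewrite -card_gt0 card_shiftF // card_gt0.
have [A' [B' [[fA fB c1 neA neB] <- <- sA sB]]] :=
  @stabilize P w Y hP A B (And5 hA hB h1 hneA hneB).
rewrite (card_split w A') (card_split w B').
have hY' : #|Y :\ w| = N by move: hY; rewrite (cardsD1 w Y) wY add1n => -[].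
have neA0 : avoid w A' != set0 by apply: (avoid_ne fA sA) => //; lia.
have neB0 : avoid w B' != set0 by apply: (avoid_ne fB sB) => //; lia.
have i1 : #|avoid w A'| + #|avoid w B'| <= 'C(N, r.+1) - 'C(N - r.+1, r.+1) + 1
  := IH r (Y :\ w) (avoid w A') (avoid w B') hY' ltac:(lia) (fam_avoid (w:=w) fA)
  (fam_avoid (w:=w) fB) (cross_sub (avoid_sub _ _) (avoid_sub _ _) c1) neA0 neB0.
have l1 : cross 1 (links w A') (links w B') by apply: (links_cross fA fB sA c1); lia.
have i2 : #|links w A'| + #|links w B'| <= 'C(N, r) - 'C(N - r.+1, r).
  case: (eqVneq (links w A') set0) => [A1e|A1ne].
    rewrite A1e cards0 add0n.
    have /set0Pn[G0 G0A] := neA0.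
    have [G0Y cG0] := fam_avoid (w:=w) fA G0A.
    have := fam_card_meet G0Y (fam_links (w:=w) fB) (links_meet G0A c1).
    by rewrite hY' card_avoid_Y // hY cG0 /=; congr (_ <= _ - 'C(_, _)); lia.
  case: (eqVneq (links w B') set0) => [B1e|B1ne].
    rewrite B1e cards0 addn0.
    have /set0Pn[H0 H0B] := neB0.
    have [H0Y cH0] := fam_avoid (w:=w) fB H0B.
    have := fam_card_meet H0Y (fam_links (w:=w) fA) (links_meet H0B (cross_sym c1)).
    by rewrite hY' card_avoid_Y // hY cH0 /=; congr (_ <= _ - 'C(_, _)); lia.
  case: r hk hk' {hA hB h1 i1 hP P} fA fB c1 l1 A1ne B1ne => [|r] hk hk' fA fB c1 l1 A1ne B1ne.
    have /set0Pn[L LA] := A1ne; have [_ cL] := fam_links (w:=w) fA LA.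
    have /set0Pn[S SB] := B1ne.
    have := leq_trans (l1 L S LA SB) (subset_leq_card (subsetIl L S)).
    by rewrite cL.
  have i : #|links w A'| + #|links w B'| <= 'C(N, r.+1) - 'C(N - r.+1, r.+1) + 1
    := IH r (Y :\ w) (links w A') (links w B') hY' ltac:(lia) (fam_links (w:=w) fA)
    (fam_links (w:=w) fB) l1 A1ne B1ne.
  have e : N - r.+1 = (N - r.+2).+1 by lia.
  move: i; rewrite e binS.
  have : 0 < 'C(N - r.+2, r) by rewrite bin_gt0; lia.
  have : 'C(N - r.+2, r.+1) + 'C(N - r.+2, r) <= 'C(N, r.+1).
    by rewrite -binS -e leq_bin2l //; lia.
  lia.
have e : N.+1 - r.+1 = (N - r.+1).+1 by lia.
rewrite e !binS.
have : 'C(N - r.+1, r.+1) <= 'C(N, r.+1) by rewrite leq_bin2l //; lia.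
have : 'C(N - r.+1, r) <= 'C(N, r) by rewrite leq_bin2l //; lia.
clia.
Qed.

Lemma setD1C Y (i j : T) : (Y :\ i) :\ j = (Y :\ j) :\ i.
Proof. by apply/setP=> x; rewrite !inE andbCA. Qed.

Lemma HM_stable (i : T) k F : 2 * k.+2 < #|T| -> fam [set: T] k.+2 F -> cross 1 F F ->
  avoid i F != set0 ->
  (forall G j, G \in F -> j \in G -> i \notin G -> sh j i G \in F) ->
  #|F| <= 'C(#|T|.-1, k.+1) - 'C(#|T|.-1 - k.+2, k.+1) + 1.
Proof.
move=> hn hF hc hne hst.
have hY : #|[set: T] :\ i| = #|T|.-1.
  by have := cardsD1 i [set: T]; rewrite inE cardsT => ->.
rewrite (card_split i F).
apply: (L2 hY) => //; first by lia.
- exact: (fam_avoid (w:=i) hF).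
- exact: (fam_links (w:=i) hF).
- move=> G G'; rewrite !inE => /andP[GF iG] /andP[G'F iG'].
  have h1 := hc G G' GF G'F.
  rewrite ltnNge; apply/negP=> hle.
  have /cards1P[j ej] : #|G :&: G'| == 1 by rewrite eqn_leq hle h1.
  have : j \in G :&: G' by rewrite ej set11.
  rewrite inE => /andP[jG jG'].
  have := hc _ _ (hst G j GF jG iG) G'F.
  have -> : sh j i G :&: G' = set0.
    apply/setP=> x; rewrite !inE; case: (eqVneq x i) => [->|xi] /=.
      by rewrite (negbTE iG').
    case: (eqVneq x j) => [->|xj] //=.
    apply/negP=> /andP[xG xG'].
    have : x \in G :&: G' by rewrite inE xG xG'.
    by rewrite ej inE (negbTE xj).
  by rewrite cards0.
- move=> G L GA LB; rewrite setIC; exact: (links_meet GA hc).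
Qed.

Lemma HM_two (i j : T) k F : i != j -> 2 * k.+2 < #|T| -> fam [set: T] k.+2 F ->
  cross 1 F F -> (forall G, G \in F -> i \notin G -> j \in G) ->
  (exists2 G, G \in F & j \notin G) -> (exists2 G, G \in F & i \notin G) ->
  #|F| <= 'C(#|T|.-1, k.+1) - 'C(#|T|.-1 - k.+2, k.+1) + 1.
Proof.
move=> ij hn hF hc hij [Gj GjF jGj] [Gi GiF iGi].
set Y := ([set: T] :\ i) :\ j.
have hY : #|Y| = #|T|.-2.
  have := cardsD1 i [set: T]; rewrite inE cardsT => e1.
  have := cardsD1 j ([set: T] :\ i); rewrite !inE eq_sym ij /= => e2.
  rewrite /Y; simpl in e1; clia.
rewrite (card_split i F) (card_split j (avoid i F)) (card_split j (links i F)).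
have -> : avoid j (avoid i F) = set0.
  apply/setP=> G; rewrite !inE; apply/negP=> /andP[/andP[GF iG] jG].
  by move: (hij G GF iG); rewrite (negbTE jG).
rewrite cards0 add0n.
have fA2 : fam Y k.+1 (avoid j (links i F)) := fam_avoid (w:=j) (fam_links (w:=i) hF).
have fB2 : fam Y k.+1 (links j (avoid i F)) := fam_links (w:=j) (fam_avoid (w:=i) hF).
have fC2 : fam Y k (links j (links i F)) := fam_links (w:=j) (fam_links (w:=i) hF).
have cC2 := fam_card fC2.
have cr : cross 1 (avoid j (links i F)) (links j (avoid i F)).
  move=> L S; rewrite !inE => /andP[/andP[iL LF] jL] /andP[jS /andP[SF iS]].
  have := hc _ _ LF SF.
  have -> : (i |: L) :&: (j |: S) = L :&: S.
    apply/setP=> x; rewrite !inE.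
    case: (eqVneq x i) => [->|xi] /=.
      by rewrite (negbTE iL); move: iS; rewrite ?inE negb_or => /andP[/negbTE -> /negbTE ->].
    case: (eqVneq x j) => [->|xj] /=; last by [].
    by rewrite (negbTE jL).
  by [].
have neA2 : avoid j (links i F) != set0.
  apply/set0Pn; exists (Gj :\ i).
  have iG : i \in Gj by apply: contraNT jGj => /(hij _ GjF).
  by rewrite !inE eqxx /= (setD1K iG) GjF (negbTE jGj) andbF.
have neB2 : links j (avoid i F) != set0.
  apply/set0Pn; exists (Gi :\ j).
  have jG := hij _ GiF iGi.
  by rewrite !inE eqxx /= (setD1K jG) GiF (negbTE ij) (negbTE iGi) andbF.
have hk2 : 2 * k.+1 <= #|T|.-2 by move: hn; clear; move: #|T| => n; lia.
have h : #|avoid j (links i F)| + #|links j (avoid i F)| <=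
  'C(#|T|.-2, k.+1) - 'C(#|T|.-2 - k.+1, k.+1) + 1 := HMX hY hk2 fA2 fB2 cr neA2 neB2.
have cC2' : #|links j (links i F)| <= 'C(#|T|.-2, k) by rewrite -hY.
move: h cC2' hn; clear; move: #|avoid j (links i F)| #|links j (avoid i F)| #|links j (links i F)| => a b c.
case: #|T| => [|[|m]] //= h1 h2 hn.
rewrite binS subSS.
have : 'C(m - k.+1, k.+1) <= 'C(m, k.+1) by rewrite leq_bin2l //; lia.
lia.
Qed.

Definition nontriv F := forall v : T, exists2 G, G \in F & v \notin G.

Lemma HM_step (i : T) k F :
  (forall F', #|[set G in F' | i \notin G]| < #|[set G in F | i \notin G]| ->
     fam [set: T] k.+2 F' -> cross 1 F' F' -> nontriv F' ->
     #|F'| <= 'C(#|T|.-1, k.+1) - 'C(#|T|.-1 - k.+2, k.+1) + 1) ->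
  2 * k.+2 < #|T| -> fam [set: T] k.+2 F -> cross 1 F F -> nontriv F ->
  #|F| <= 'C(#|T|.-1, k.+1) - 'C(#|T|.-1 - k.+2, k.+1) + 1.
Proof.
move=> IHF hn hF hc hnt.
case: (boolP [forall G in F, forall j, ((j \in G) && (i \notin G)) ==> (sh j i G \in F)])
  => [st|/forall_inPn[G0 G0F /forallPn[j]]].
  apply: (@HM_stable i) => //.
    by have [G GF iG] := hnt i; apply/set0Pn; exists G; rewrite inE GF iG.
  move=> G j GF jG iG; move/forall_inP: st => /(_ G GF) /forallP /(_ j).
  by rewrite jG iG => /implyP; apply.
rewrite negb_imply => /andP[/andP[jG0 iG0] nG0].
have ij : i != j by apply: contraNneq iG0 => ->.
have ji : i != j := ij.
set F' := shiftF j i F.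
have pl : #|[set H in F' | i \notin H]| < #|[set G in F | i \notin G]|.
  apply: (@pot_lt (fun H => i \notin H) j i F G0) => //.
  by move=> G; rewrite negbK sh_in.
case: (eqVneq (avoid i F') set0) => [e|ne'].
  apply: (HM_two ij) => //.
  - move=> G GF iG; have : shs j i F G \in F' by apply: imset_f.
    rewrite /shs; case: ifP => [/and3P[jG _ _]|_ GF'] //.
    have : G \in avoid i F' by rewrite inE GF' iG.
    by rewrite e inE.
case: (boolP [forall v, [exists G in F', v \notin G]]) => [ntF'|/forallPn[v /exists_inPn hv]].
  rewrite -(@card_shiftF j i F ij) -/F'.
  apply: IHF => //.
  - by apply: fam_shift => //; rewrite inE.
  - by apply: cross_shift.
  - move=> v; move/forallP: ntF' => /(_ v) /exists_inP[G GF vG]; by exists G.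
exfalso.
have /set0Pn[G' ] := ne'; rewrite inE => /andP[G'F iG'].
have vi : v != i by apply: contraNneq iG' => <-; have := hv G' G'F; rewrite negbK.
have [G GF vG] := hnt v.
have := hv _ (imset_f (shs j i F) GF); rewrite negbK /shs.
case: ifP => _; last by rewrite (negbTE vG).
by rewrite !inE (negbTE vi) (negbTE vG) andbF.
Qed.

Lemma HM k F : 2 * k.+2 < #|T| -> fam [set: T] k.+2 F -> cross 1 F F -> nontriv F ->
  #|F| <= 'C(#|T|.-1, k.+1) - 'C(#|T|.-1 - k.+2, k.+1) + 1.
Proof.
move=> hn hF hc hnt.
have /card_gt0P[i _] : 0 < #|T| by exact: leq_ltn_trans (leq0n _) hn.
suff: forall m F, #|[set G in F | i \notin G]| <= m -> fam [set: T] k.+2 F ->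
  cross 1 F F -> nontriv F ->
  #|F| <= 'C(#|T|.-1, k.+1) - 'C(#|T|.-1 - k.+2, k.+1) + 1 by apply.
elim=> [|m IH] {}F hm {}hF {}hc {}hnt; apply: (@HM_step i) => // F' hlt.
  by move: (leq_trans hlt hm).
by apply: IH; rewrite -ltnS; apply: leq_trans hlt hm.
Qed.

End Shift.

Theorem lemma2p10 (n k : nat) (Q : {set {set 'I_n}}) (x1 x2 : {set 'I_n}) :
  5 <= 2 * k + 1 -> 2 * k + 1 <= n ->
  kindep k Q ->
  kvert k x1 -> kvert k x2 -> kadj x1 x2 ->
  x1 \in Q ->
  [disjoint knbhd k [set x1; x2] & Q] ->
  #|Q| <= 'C(n - 1, k - 1) - 'C(n - k - 1, k - 1) + 1.
Proof.
case: k => [|[|k]] //= hk hn /andP[/forall_inP hv /forall_inP hi] kx1 kx2 a12 x1Q hdis.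
have cT : #|'I_n| = n by rewrite card_ord.
have hF : fam [set: 'I_n] k.+2 Q.
  by move=> G GQ; split; [apply: subsetT | apply/eqP; apply: hv].
have hc : cross 1 Q Q.
  move=> G H GQ HQ; move/forall_inP: (hi G GQ) => /(_ H HQ).
  by rewrite /kadj -setI_eq0 card_gt0.
have e1 : n - k.+2 - 1 = n.-1 - k.+2 by lia.
rewrite subSS subn0 e1 subn1.
case: (boolP [forall v, [exists G in Q, v \notin G]]) => [nt|/forallPn[v /exists_inPn hv']].
  have nt' : nontriv Q.
    move=> v; move/forallP: nt => /(_ v) /exists_inP[G GQ vG]; by exists G.
  have := HM (T := 'I_n) (k := k) (F := Q) ltac:(rewrite cT; lia) hF hc nt'.
  by rewrite cT.
have vQ : forall G, G \in Q -> v \in G by move=> G GQ; have := hv' G GQ; rewrite negbK.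
have vx1 := vQ _ x1Q.
have vx2 : v \notin x2.
  by apply/negP=> vx2; rewrite (disjointFr (a12 : [disjoint x1 & x2]) vx1) in vx2.
rewrite (cardsD1 x1 Q) x1Q add1n addn1 ltnS.
set Q' := Q :\ x1.
have hF' : fam [set: 'I_n] k.+2 Q' by apply: fam_sub hF; apply: subsetDl.
rewrite (card_split v Q').
have -> : avoid v Q' = set0.
  apply/setP=> G; rewrite !inE; apply/negP=> /andP[/andP[_ GQ] vG].
  by rewrite vQ in vG.
rewrite cards0 add0n.
have hY : #|[set: 'I_n] :\ v| = n.-1.
  by have := cardsD1 v [set: 'I_n]; rewrite inE cardsT card_ord add1n => e; rewrite [in RHS]e.
have x2Y : x2 \subset [set: 'I_n] :\ v.
  by apply/subsetP=> x xx2; rewrite !inE andbT; apply: contraNneq vx2 => <-.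
have := fam_card_meet x2Y (fam_links (w:=v) hF') _.
rewrite hY.
have -> : #|([set: 'I_n] :\ v) :\: x2| = n.-1 - k.+2.
  rewrite cardsD (setIidPr x2Y) hY; move/eqP: kx2 => ->; by [].
apply.
move=> L; rewrite !inE => /andP[vL /andP[Gx1 GQ]].
rewrite card_gt0 setI_eq0; apply/negP=> dL.
have dG : [disjoint v |: L & x2].
  rewrite -setI_eq0; apply/eqP/setP=> x; rewrite !inE.
  case: (eqVneq x v) => [->|xv] /=; first by rewrite (negbTE vx2).
  by apply/negP=> /andP[xL xx2]; rewrite (disjointFr dL xL) in xx2.
have : v |: L \in knbhd k.+2 [set x1; x2].
  rewrite inE (hv _ GQ) /= !inE negb_or Gx1 /=.
  apply/andP; split.
    apply/negP=> /eqP e; move/forall_inP: (hi _ x1Q) => /(_ _ GQ).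
    by rewrite e a12.
  apply/existsP; exists x2; rewrite !inE eqxx orbT /= /kadj.
  by rewrite disjoint_sym.
by move=> hN; rewrite (disjointFr hdis hN) in GQ.
Qed.
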